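(* Let $k\geq 1$. If $R$ is a $k$-clean ring (associative with identity), then the matrix ring $M_n(R)$ is $k$-clean for every positive integer $n$.
   Context: For a positive integer $k$, a ring $S$ is $k$-clean if every element of $S$ can be written as $e+u_1+\cdots+u_k$ with $e=e^2\in S$ and $u_1,\dots,u_k$ units of $S$. *)

(* Defs.v *)
From mathcomp Require Import all_boot all_algebra.
Set Implicit Arguments. Unset Strict Implicit. Unset Printing Implicit Defensive.
Import GRing.Theory.
Local Open Scope ring_scope.

Definition is_unit (S : pzRingType) (u : S) : Prop :=
  exists v : S, u * v = 1 /\ v * u = 1.

Definition k_clean (k : nat) (S : pzRingType) : Prop :=
  forall x : S, exists (e : S) (u : 'I_k -> S),
    e * e = e /\ (forall i, is_unit (u i)) /\ x = e + \sum_(i < k) u i.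

(* Main.v *)
Require Import Defs.
From mathcomp Require Import all_boot all_algebra.
Set Implicit Arguments. Unset Strict Implicit. Unset Printing Implicit Defensive.
Import GRing.Theory.
Local Open Scope ring_scope.

Section Aux.
Variable R : pzRingType.

Definition unitm n (u : 'M[R]_n) := exists v : 'M[R]_n, u *m v = 1%:M /\ v *m u = 1%:M.

Lemma unitmE n (u : 'M[R]_n) : is_unit u <-> unitm u.
Proof. by rewrite /is_unit /unitm -mulmxE idmxE. Qed.

Lemma unitmM n (A B : 'M[R]_n) : unitm A -> unitm B -> unitm (A *m B).
Proof.
move=> [A' [h1 h2]] [B' [h3 h4]]; exists (B' *m A'); split.
  by rewrite mulmxA -(mulmxA A) h3 mulmx1 h1.
by rewrite mulmxA -(mulmxA B') h2 mulmx1 h4.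
Qed.

Lemma block0 m1 m2 n1 n2 : block_mx 0 0 0 0 = 0 :> 'M[R]_(m1 + m2, n1 + n2).
Proof. exact: block_mx_const. Qed.

Lemma unit_lower m p (x : 'M[R]_(p, m)) : unitm (block_mx 1%:M 0 x 1%:M).
Proof.
exists (block_mx 1%:M 0 (- x) 1%:M); split; rewrite mulmx_block !mulmx0 !mul0mx
  !mul1mx !mulmx1 !addr0 !add0r ?subrr ?addNr;
  by rewrite [RHS]scalar_mx_block.
Qed.

Lemma unit_upper m p (x : 'M[R]_(m, p)) : unitm (block_mx 1%:M x 0 1%:M).
Proof.
exists (block_mx 1%:M (- x) 0 1%:M); split; rewrite mulmx_block !mulmx0 !mul0mx
  !mul1mx !mulmx1 !addr0 !add0r ?subrr ?addNr;
  by rewrite [RHS]scalar_mx_block.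
Qed.

Lemma unit_diag m p (u : 'M[R]_m) (v : 'M[R]_p) :
  unitm u -> unitm v -> unitm (block_mx u 0 0 v).
Proof.
move=> [u' [h1 h2]] [v' [h3 h4]]; exists (block_mx u' 0 0 v').
split; rewrite !mulmx_block !mulmx0 !mul0mx !addr0 !add0r ?h1 ?h2 ?h3 ?h4;
  by rewrite [RHS]scalar_mx_block.
Qed.

Lemma sum_block m p I (r : seq I) (A : I -> 'M[R]_m) (B : I -> 'M[R]_(m, p))
   (C : I -> 'M[R]_(p, m)) (D : I -> 'M[R]_p) :
  \sum_(i <- r) block_mx (A i) (B i) (C i) (D i) =
  block_mx (\sum_(i <- r) A i) (\sum_(i <- r) B i) (\sum_(i <- r) C i) (\sum_(i <- r) D i).
Proof.
elim: r => [|i r IH]; first by rewrite !big_nil block0.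
by rewrite !big_cons IH add_block_mx.
Qed.

Lemma clean_block k m p : (1 <= k)%N -> k_clean k 'M[R]_m -> k_clean k 'M[R]_p ->
  k_clean k 'M[R]_(m + p).
Proof.
move=> hk Hm Hp x.
pose i0 := Ordinal hk.
rewrite -(submxK x).
set a := ulsubmx x; set b := ursubmx x; set c := dlsubmx x; set d := drsubmx x.
have [f [u [Hf [Hu Ha]]]] := Hm a.
have [u0' [hu1 hu2]] : unitm (u i0) by apply/unitmE; first [exact: Hu|exact: Hv].
have [g [v [Hg [Hv Hd]]]] := Hp (d - c *m u0' *m b).
exists (block_mx f 0 0 g).
exists (fun i => block_mx (u i) 0 0 (v i) +
   (if i == i0 then block_mx 0 b c (c *m u0' *m b) else 0)).
split; [|split].
- rewrite -mulmxE mulmx_block !mulmx0 !mul0mx !addr0 !add0r.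
  by rewrite !mulmxE Hf Hg.
- move=> i; apply/unitmE.
  have [ui' [h1 h2]] : unitm (u i) by apply/unitmE; first [exact: Hu|exact: Hv].
  have [vi' [h3 h4]] : unitm (v i) by apply/unitmE; first [exact: Hu|exact: Hv].
  case: eqP => [ei|_]; last first.
    by rewrite addr0; apply: unit_diag; [exists ui'|exists vi'].
  subst i.
  rewrite add_block_mx !addr0 !add0r.
  have -> : block_mx (u i0) b c (v i0 + c *m u0' *m b) =
    block_mx 1%:M 0 (c *m u0') 1%:M *m block_mx (u i0) 0 0 (v i0)
      *m block_mx 1%:M (u0' *m b) 0 1%:M.
    rewrite !mulmx_block !mulmx0 !mul0mx !mulmx1 !mul1mx !addr0 !add0r.
    by rewrite (mulmxA (u i0)) hu1 mul1mx -(mulmxA c u0' (u i0)) hu2 mulmx1 (mulmxA c) addrC.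
  apply: unitmM; [apply: unitmM|].
  + exact: unit_lower.
  + by apply: unit_diag; [exists u0'|exists vi'].
  + exact: unit_upper.
- rewrite big_split /= -big_mkcond big_pred1_eq sum_block !big1_eq.
  rewrite !add_block_mx !addr0 !add0r -Ha.
  by rewrite addrA -Hd subrK.
Qed.
Lemma clean_one k : k_clean k R -> k_clean k 'M[R]_1.
Proof.
move=> H x; have [e [u [He [Hu Hx]]]] := H (x 0 0).
exists e%:M, (fun i => (u i)%:M); split; [|split].
- by rewrite -mulmxE -scalar_mxM He.
- move=> i; apply/unitmE; have [w [h1 h2]] := Hu i.
  by exists w%:M; rewrite -!scalar_mxM h1 h2.
- by rewrite [LHS]mx11_scalar Hx raddfD /= raddf_sum.
Qed.
End Aux.

Theorem corollary6 (k : nat) (R : pzRingType) :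
  (1 <= k)%N -> k_clean k R -> forall n : nat, k_clean k 'M[R]_n.+1.
Proof.
move=> hk H; elim=> [|n IH]; first exact: clean_one.
exact: (clean_block hk (clean_one H) IH).
Qed.
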